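(* Let $K=\mathbb{F}_{p^h}$, $p$ prime, and let $\sigma:K\to K$, $k\mapsto k^{p^r}$, for some $r\in\{1,\dots,h-1\}$; let $n=h/\gcd(r,h)$ be the order of $\sigma$ and $q=p^{\gcd(r,h)}$, so that $\mathrm{Fix}(\sigma)\cong\mathbb{F}_q$. (i) If $n\in\{2,3\}$, then $f(t)=t^n-a\in K[t;\sigma]$ is irreducible if and only if $a\in K\setminus\mathrm{Fix}(\sigma)$. (ii) If $n$ is a prime and $n\mid(q-1)$, then $f(t)=t^n-a\in K[t;\sigma]$ is irreducible if and only if $a\in K\setminus\mathrm{Fix}(\sigma)$. In both cases (i) and (ii), there are precisely $p^h-q$ irreducible polynomials in $K[t;\sigma]$ of the form $t^n-a$ with $a\in K$.
   Context: $K[t;\sigma]$ is the skew polynomial ring over $K$ with $tk=\sigma(k)t$. $\mathrm{Fix}(\sigma)=\{k\in K:\sigma(k)=k\}$. A polynomial is irreducible if it is not a unit and has no factorization $f=gh$ with $\deg g,\deg h<\deg f$. *)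

(* Defs.v *)
From HB Require Import structures.
From mathcomp Require Import all_boot all_order all_algebra all_field.
Set Implicit Arguments. Unset Strict Implicit. Unset Printing Implicit Defensive.
Import GRing.Theory.
Local Open Scope ring_scope.

(* Skew polynomial ring K[t; sigma] with t k = sigma(k) t.  Elements are
   represented by their coefficient sequences, i.e. by {poly K}
   (f = \sum_i f`_i t^i, coefficients on the left); the additive structure
   is that of {poly K}, and the multiplication is the skew one:
   (\sum a_i t^i)(\sum b_j t^j) = \sum_{i,j} a_i sigma^i(b_j) t^(i+j). *)
Definition skew_mul (K : nzRingType) (sigma : K -> K) (f g : {poly K}) : {poly K} :=
  \poly_(k < (size f + size g).-1)
     \sum_(i < k.+1) f`_i * iter i sigma (g`_(k - i)).

Definition skew_unit (K : nzRingType) (sigma : K -> K) (f : {poly K}) : Prop :=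
  exists g : {poly K}, skew_mul sigma f g = 1 /\ skew_mul sigma g f = 1.

(* irreducible: not a unit and no factorization f = g h with
   deg g, deg h < deg f (degree comparison via size = deg + 1, the zero
   polynomial having size 0 / degree -oo). *)
Definition skew_irreducible (K : nzRingType) (sigma : K -> K) (f : {poly K}) : Prop :=
  ~ skew_unit sigma f /\
  forall g h : {poly K}, f = skew_mul sigma g h ->
    ~ ((size g < size f)%N /\ (size h < size f)%N).

Definition frobp (K : nzRingType) (p r : nat) (k : K) : K := k ^+ (p ^ r).

(* Main.v *)
Require Import Defs.
From HB Require Import structures.
From mathcomp Require Import all_boot all_order all_algebra all_field.
From mathcomp Require Import zify.
Import GRing.Theory.
Local Open Scope ring_scope.

Section Skew.
Variable K : fieldType.
Variable s : K -> K.
Hypothesis s0 : s 0 = 0.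
Hypothesis s1 : s 1 = 1.
Hypothesis sD : forall x y, s (x + y) = s x + s y.
Hypothesis sM : forall x y, s (x * y) = s x * s y.
Hypothesis sinj : forall x, s x = 0 -> x = 0.

Lemma it0 i : iter i s 0 = 0.
Proof. by elim: i => //= i ->. Qed.
Lemma it1 i : iter i s 1 = 1.
Proof. by elim: i => //= i ->. Qed.
Lemma itD i x y : iter i s (x + y) = iter i s x + iter i s y.
Proof. by elim: i => //= i ->. Qed.
Lemma itM i x y : iter i s (x * y) = iter i s x * iter i s y.
Proof. by elim: i => //= i ->. Qed.
Lemma itN i x : iter i s (- x) = - iter i s x.
Proof. by apply/eqP; rewrite -addr_eq0 -itD addNr it0. Qed.
Lemma itinj i x : iter i s x = 0 -> x = 0.
Proof. by elim: i => //= i IH /sinj /IH. Qed.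
Lemma it_add i j x : iter i s (iter j s x) = iter (i + j) s x.
Proof. by rewrite iterD. Qed.

Notation sm := (skew_mul s).

Lemma coef_skew f g k :
  (sm f g)`_k = \sum_(i < k.+1) f`_i * iter i s (g`_(k - i)).
Proof.
rewrite /skew_mul coef_poly; case: ltnP => // hk; rewrite big1 // => i _.
case: (ltnP i (size f)) => hi; last by rewrite nth_default // mul0r.
rewrite (nth_default 0 (_ : size g <= k - i)%N) ?it0 ?mulr0 //.
have := ltn_ord i; lia.
Qed.

Lemma skew_mulDl f1 f2 g : sm (f1 + f2) g = sm f1 g + sm f2 g.
Proof.
apply/polyP => k; rewrite coefD !coef_skew -big_split /=.
by apply: eq_bigr => i _; rewrite coefD mulrDl.
Qed.

Lemma skew_mulDr f g1 g2 : sm f (g1 + g2) = sm f g1 + sm f g2.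
Proof.
apply/polyP => k; rewrite coefD !coef_skew -big_split /=.
by apply: eq_bigr => i _; rewrite coefD itD mulrDr.
Qed.

Lemma skew_mul0l g : sm 0 g = 0.
Proof. by apply/polyP => k; rewrite coef_skew coef0 big1 // => i _; rewrite coef0 mul0r. Qed.
Lemma skew_mul0r g : sm g 0 = 0.
Proof. by apply/polyP => k; rewrite coef_skew coef0 big1 // => i _; rewrite coef0 it0 mulr0. Qed.

Lemma skew_mulNl f g : sm (- f) g = - sm f g.
Proof. by apply/eqP; rewrite -addr_eq0 -skew_mulDl addNr skew_mul0l. Qed.
Lemma skew_mulNr f g : sm f (- g) = - sm f g.
Proof. by apply/eqP; rewrite -addr_eq0 -skew_mulDr addNr skew_mul0r. Qed.
Lemma skew_mulBl f1 f2 g : sm (f1 - f2) g = sm f1 g - sm f2 g.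
Proof. by rewrite skew_mulDl skew_mulNl. Qed.
Lemma skew_mulBr f g1 g2 : sm f (g1 - g2) = sm f g1 - sm f g2.
Proof. by rewrite skew_mulDr skew_mulNr. Qed.

Lemma skew_suml I (r : seq I) (P : pred I) (F : I -> {poly K}) g :
  sm (\sum_(i <- r | P i) F i) g = \sum_(i <- r | P i) sm (F i) g.
Proof.
elim/big_rec2: _ => [|i y1 y2 _ <-]; first exact: skew_mul0l.
by rewrite skew_mulDl.
Qed.
Lemma skew_sumr I (r : seq I) (P : pred I) (F : I -> {poly K}) g :
  sm g (\sum_(i <- r | P i) F i) = \sum_(i <- r | P i) sm g (F i).
Proof.
elim/big_rec2: _ => [|i y1 y2 _ <-]; first exact: skew_mul0r.
by rewrite skew_mulDr.
Qed.

Lemma coef_skew_monr f c j k :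
  (sm f (c *: 'X^j))`_k = if (j <= k)%N then f`_(k - j) * iter (k - j) s c else 0.
Proof.
rewrite coef_skew; case: leqP => hjk.
  have hi : (k - j < k.+1)%N by lia.
  rewrite (bigD1 (Ordinal hi)) //= big1 ?addr0.
    by rewrite coefZ coefXn (_ : k - (k - j) = j)%N ?eqxx ?mulr1 //; lia.
  move=> i /eqP hne; rewrite coefZ coefXn.
  have -> : (k - i == j)%N = false.
    apply/negbTE/eqP => E; apply: hne; apply: val_inj => /=; have := ltn_ord i; lia.
  by rewrite mulr0 it0 mulr0.
rewrite big1 // => i _; rewrite coefZ coefXn.
have -> : (k - i == j)%N = false by apply/negbTE/eqP; lia.
by rewrite mulr0 it0 mulr0.
Qed.

Lemma coef_skew_monl f c j k :
  (sm (c *: 'X^j) f)`_k = if (j <= k)%N then c * iter j s (f`_(k - j)) else 0.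
Proof.
rewrite coef_skew; case: leqP => hjk.
  have hi : (j < k.+1)%N by lia.
  rewrite (bigD1 (Ordinal hi)) //= big1 ?addr0.
    by rewrite coefZ coefXn eqxx mulr1.
  move=> i /eqP hne; rewrite coefZ coefXn.
  have -> : (i == j :> nat) = false.
    apply/negbTE/eqP => E; apply: hne; apply: val_inj => /=; lia.
  by rewrite mulr0 mul0r.
rewrite big1 // => i _; rewrite coefZ coefXn.
have -> : (i == j :> nat) = false by apply/negbTE/eqP; have := ltn_ord i; lia.
by rewrite mulr0 mul0r.
Qed.

Lemma skew_mon a i b j :
  sm (a *: 'X^i) (b *: 'X^j) = (a * iter i s b) *: 'X^(i + j).
Proof.
apply/polyP => k; rewrite coef_skew_monl coefZ !coefXn.
case: leqP => h.
  rewrite coefZ coefXn.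
  have -> : (k - i == j)%N = (k == i + j)%N by apply/eqP/eqP; lia.
  by case: eqP => E; rewrite ?mulr1 ?mulr0 ?it0 ?mulr0.
rewrite coefZ coefXn.
have -> : (k == i + j)%N = false by apply/eqP; lia.
by rewrite mulr0.
Qed.

Lemma poly_exp (f : {poly K}) : f = \sum_(i < size f) f`_i *: 'X^i.
Proof. by rewrite -[f in LHS]coefK poly_def. Qed.

Lemma skew_mulA f g h : sm (sm f g) h = sm f (sm g h).
Proof.
rewrite [f]poly_exp.
rewrite [sm (\sum_(i < size f) _) g]skew_suml.
rewrite skew_suml.
rewrite skew_suml; apply: eq_bigr => i _.
rewrite [g]poly_exp.
rewrite [sm (\sum_(i < size g) _) h]skew_suml.
rewrite !skew_sumr skew_suml; apply: eq_bigr => j _.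
rewrite [h]poly_exp.
rewrite skew_mon !skew_sumr; apply: eq_bigr => l _.
by rewrite !skew_mon itM it_add mulrA addnA.
Qed.


Lemma ar1 a b x : (0 < a)%N -> (0 < b)%N -> x <> a.-1 -> (x < a)%N -> (b <= (a+b).-2 - x)%N.
Proof. lia. Qed.

Lemma ar2 a b n : (a+b).-1 = n.+1 -> (a < n.+1)%N -> (b < n.+1)%N -> (0 < b.-1 < n)%N.
Proof. move=> *; apply/andP; split; lia. Qed.

Lemma skew_size f g : f != 0 -> g != 0 -> size (sm f g) = (size f + size g).-1.
Proof.
move=> f0 g0; rewrite /skew_mul size_poly_eq //.
have sf : (0 < size f)%N by rewrite size_poly_gt0.
have sg : (0 < size g)%N by rewrite size_poly_gt0.
have hi : ((size f).-1 < ((size f + size g).-1).-1.+1)%N by lia.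
rewrite (bigD1 (Ordinal hi)) //= big1 ?addr0.
  rewrite mulf_eq0 negb_or; apply/andP; split.
    by rewrite -lead_coefE lead_coef_eq0.
  apply/negP => /eqP /itinj /eqP; apply/negP.
  rewrite (_ : ((size f + size g).-1.-1 - (size f).-1 = (size g).-1)%N); last by lia.
  by rewrite -lead_coefE lead_coef_eq0.
move=> i /eqP hne.
have hne' : (nat_of_ord i <> (size f).-1) by move=> E; apply: hne; apply: val_inj.
case: (ltnP i (size f)) => hif.
  have hle : (size g <= (size f + size g).-2 - i)%N by exact: ar1.
  by rewrite (nth_default 0 hle) it0 mulr0.
by rewrite nth_default // mul0r.
Qed.

Lemma skew_coef0 f g : (sm f g)`_0 = f`_0 * g`_0.
Proof. by rewrite coef_skew big_ord1. Qed.

Lemma polyC_mon (c : K) : c%:P = c *: 'X^0.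
Proof. by rewrite expr0 alg_polyC. Qed.

Lemma Xn_mon n : 'X^n = (1 : K) *: 'X^n.
Proof. by rewrite scale1r. Qed.

Lemma irr_key n a (n0 : (0 < n)%N) (sn : forall x, iter n s x = x)
  (ha : forall d, (0 < d < n)%N -> iter d s a != a) (a0 : a != 0) g h :
  sm g h = 'X^n - a%:P -> (size g < n.+1)%N -> (size h < n.+1)%N -> False.
Proof.
move=> E sgn shn.
have sf : size ('X^n - a%:P) = n.+1 by rewrite size_XnsubC.
have g0 : g != 0 by apply/eqP => g0; move: E sf; rewrite g0 skew_mul0l => <-; rewrite size_poly0.
have h0 : h != 0 by apply/eqP => h0; move: E sf; rewrite h0 skew_mul0r => <-; rewrite size_poly0.
have ssum : ((size g + size h).-1 = n.+1)%N by rewrite -skew_size // E.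
have c0 : h`_0 != 0.
  apply/eqP => c0; move: (skew_coef0 g h); rewrite E c0 mulr0 coefB coefXn coefC /=.
  have -> : (0 == n)%N = false by apply/eqP; lia.
  by rewrite sub0r => /eqP; rewrite oppr_eq0 (negbTE a0).
have cent : sm h 'X^n = sm 'X^n h.
  apply/polyP => k; rewrite [in LHS]Xn_mon [in RHS]Xn_mon coef_skew_monr coef_skew_monl.
  by case: leqP => // _; rewrite it1 sn mulr1 mul1r.
set e := 'X^n - sm h g.
have He : sm e h = sm h a%:P.
  rewrite skew_mulBl skew_mulA E skew_mulBr -cent.
  by rewrite opprB addrC subrK.
have coefha k : (sm h a%:P)`_k = h`_k * iter k s a.
  by rewrite polyC_mon coef_skew_monr subn0.
have ha0 : sm h a%:P != 0.
  apply/eqP => /(congr1 (fun p : {poly K} => p`_0)); rewrite coefha coef0 /=.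
  by move/eqP; rewrite mulf_eq0 (negbTE c0) (negbTE a0).
have e0 : e != 0 by apply/eqP => e0; move: ha0; rewrite -He e0 skew_mul0l eqxx.
have : size (sm e h) = size (sm h a%:P) by rewrite He.
rewrite skew_size // skew_size // ?polyC_eq0 // size_polyC a0 => se.
have se1 : (size e <= 1)%N by lia.
have Ee := size1_polyC se1.
have key k : e`_0 * h`_k = h`_k * iter k s a.
  by rewrite -coefha -He [in RHS]Ee polyC_mon coef_skew_monl /= subn0.
have k1 := key 0%N; have k2 := key (size h).-1.
have hd : h`_(size h).-1 != 0 by rewrite -lead_coefE lead_coef_eq0.
move: k1; rewrite mulrC => /mulfI => /(_ c0) k1.
move: k2; rewrite mulrC => /mulfI => /(_ hd) k2.
have := ha (size h).-1; rewrite -k2 /= k1 eqxx => /(_ _)/negP; apply.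
  exact: (ar2 _ _ _ ssum sgn shn).
by [].
Qed.


Lemma not_unit n a : (0 < n)%N -> ~ skew_unit s ('X^n - a%:P).
Proof.
move=> n0 [g [E _]].
have sf : size ('X^n - a%:P) = n.+1 by rewrite size_XnsubC.
have g0 : g != 0 by apply/eqP => g0; move: E; rewrite g0 skew_mul0r => /eqP; rewrite eq_sym oner_eq0.
have f0 : 'X^n - a%:P != 0 by rewrite -size_poly_eq0 sf.
have := skew_size _ _ f0 g0; rewrite E size_poly1 sf.
have : (0 < size g)%N by rewrite size_poly_gt0.
lia.
Qed.

Definition cf n b k := \prod_(k.+1 <= j < n) iter j s b.

Lemma reduc n b : (0 < n)%N ->
  sm (\poly_(k < n) cf n b k) ('X - b%:P) = 'X^n - (\prod_(0 <= j < n) iter j s b)%:P.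
Proof.
move=> n0; apply/polyP => k.
have hX : 'X - b%:P = (1 : K) *: 'X^1 - b *: 'X^0 by rewrite scale1r expr1 polyC_mon.
rewrite hX skew_mulBr coefB coef_skew_monr coef_skew_monr !coef_poly.
rewrite coefB coefXn coefC subn0 /=.
case: k => [|k] /=.
  rewrite n0 (big_ltn n0) /= /cf.
  have -> : (0 == n)%N = false by rewrite eq_sym; apply/negbTE; rewrite -lt0n.
  by rewrite mulrC !sub0r.
rewrite (_ : (k.+1 - 1 = k)%N); last by lia.
rewrite it1 mulr1 /=.
case: (ltngtP k.+1 n) => hk.
- by rewrite /cf (big_ltn hk) /= mulrC subrr subr0.
- by rewrite mul0r !subr0.
- by rewrite /cf -hk big_geq // mul0r !subr0.
Qed.

End Skew.

Lemma iter_fixM T (f : T -> T) k a : iter k f a = a -> forall u, iter (u * k) f a = a.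
Proof. by move=> H; elim=> // u IH; rewrite mulSn iterD IH. Qed.

Lemma fix_coprime T (f : T -> T) n k a : (0 < n)%N ->
  (forall x, iter n f x = x) -> coprime k n -> iter k f a = a -> f a = a.
Proof.
move=> n0 hn cop hk.
have [u _ hu] := Bezoutl k n0.
move: hu; rewrite (eqP (_ : gcdn n k == 1)%N); last by rewrite coprime_sym in cop.
case/dvdnP=> c hc.
have E1 : iter (1 + u * k) f a = f a by rewrite iterD iter_fixM.
by rewrite -E1 hc iter_fixM //; apply: hn.
Qed.

Lemma iter_pow (R : pzSemiRingType) m j (x : R) : iter j (fun y => y ^+ m) x = x ^+ (m ^ j).
Proof. by elim: j => [|j IH] /=; rewrite ?expr1 // IH -exprM expnSr. Qed.

Lemma mod_cancel k n a b : coprime k n -> (a < n)%N -> (b < n)%N ->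
  ((k * a) %% n = (k * b) %% n)%N -> a = b.
Proof.
move=> cp an bn.
have key x y : (x <= y)%N -> (y < n)%N -> ((k * x) %% n = (k * y) %% n)%N -> x = y.
  move=> le12 yn E.
  have : (k * y == k * x %[mod n])%N by rewrite E.
  rewrite eqn_mod_dvd ?leq_mul2l ?le12 ?orbT // -mulnBr Gauss_dvdr; last first.
    by rewrite coprime_sym.
  move=> dv; have : (y - x < n)%N by lia.
  case E0 : (y - x)%N => [|m]; first by move=> _; lia.
  by move: dv; rewrite E0 => /(dvdn_leq (ltn0Sn _)); lia.
case: (leqP a b) => le E; first exact: key.
by apply/esym/key; [exact: ltnW | | rewrite E].
Qed.

Section FF.
Variables (p h r : nat) (K : finFieldType).
Hypotheses (hp : prime p) (hK : #|K| = (p ^ h)%N) (hr1 : (1 <= r)%N) (hrh : (r <= h.-1)%N).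
Notation g := (gcdn r h).
Notation n := (h %/ gcdn r h)%N.
Notation q := (p ^ gcdn r h)%N.
Notation r' := (r %/ gcdn r h)%N.
Notation sig := (frobp (K:=K) p r).
Notation tau := (fun y : K => y ^+ q).

Lemma g_pos : (0 < g)%N.
Proof. by rewrite gcdn_gt0 hr1. Qed.
Lemma h_eq : h = (n * g)%N.
Proof. by rewrite divnK // dvdn_gcdr. Qed.
Lemma r_eq : r = (r' * g)%N.
Proof. by rewrite divnK // dvdn_gcdl. Qed.
Lemma n_gt1 : (1 < n)%N.
Proof.
have gr : (g <= r)%N by apply: dvdn_leq; [lia | exact: dvdn_gcdl].
have := h_eq; case: n => [|[|m]] //= E; lia.
Qed.
Lemma r'_pos : (0 < r')%N.
Proof. have := r_eq; case: r' => //= E; lia. Qed.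
Lemma cop : coprime r' n.
Proof.
have E : g = (gcdn r' n * g)%N by rewrite muln_gcdl -r_eq -h_eq.
apply/eqP; have := g_pos; move: E; move: (gcdn r' n) => x; nia.
Qed.
Lemma q_gt1 : (1 < q)%N.
Proof. by rewrite -{1}(expn0 p) ltn_exp2l ?prime_gt1 ?g_pos. Qed.
Lemma qn : (q ^ n)%N = (p ^ h)%N.
Proof. by rewrite -expnM mulnC -h_eq. Qed.

Lemma charK : p \in [pchar K].
Proof. exact: card_finPcharP hK hp. Qed.
Lemma frobD m (x y : K) : (x + y) ^+ (p ^ m) = x ^+ (p ^ m) + y ^+ (p ^ m).
Proof. by apply: exprDn_pchar; rewrite pnatX (pnatE _ hp) charK. Qed.

Lemma s0 : sig 0 = 0.
Proof. by rewrite /frobp expr0n (_ : (p ^ r == 0)%N = false) //; apply/negbTE; rewrite -lt0n expn_gt0 prime_gt0. Qed.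
Lemma s1 : sig 1 = 1.
Proof. by rewrite /frobp expr1n. Qed.
Lemma sD x y : sig (x + y) = sig x + sig y.
Proof. exact: frobD. Qed.
Lemma sM x y : sig (x * y) = sig x * sig y.
Proof. exact: exprMn. Qed.
Lemma sinj x : sig x = 0 -> x = 0.
Proof. by move/eqP; rewrite /frobp expf_eq0 => /andP [_ /eqP]. Qed.

Lemma fixPk k (x : K) : x ^+ ((p ^ h) ^ k) = x.
Proof. by elim: k => [|k IH]; rewrite ?expr1 // expnSr exprM IH -hK expf_card. Qed.

Lemma sig_n x : iter n sig x = x.
Proof.
rewrite /frobp iter_pow -expnM (_ : (r * n = h * r')%N) ?expnM ?fixPk //.
have E1 := r_eq; have E2 := h_eq; set a := r' in E1 *; set b := n in E2 *.
set c := g in E1 E2; rewrite {1}E1 {1}E2; nia.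
Qed.

Lemma tau_n x : iter n tau x = x.
Proof. by rewrite iter_pow qn -(expn1 (p ^ h)) fixPk. Qed.

Lemma sig_tau x : sig x = iter r' tau x.
Proof. by rewrite iter_pow /frobp -expnM mulnC -r_eq. Qed.

Hypothesis hn : prime n.

Lemma fix_iter a d : sig a != a -> (0 < d < n)%N -> iter d sig a != a.
Proof.
move=> ha /andP [d0 dn]; apply: contra ha => /eqP hd; apply/eqP.
apply: (@fix_coprime _ sig n d).
- exact: prime_gt0.
- exact: sig_n.
- rewrite coprime_sym prime_coprime //; apply/negP => /dvdn_leq; lia.
- exact: hd.
Qed.


Lemma n_pos : (0 < n)%N.
Proof. by have := n_gt1; lia. Qed.

Notation M0 := (\sum_(i < n) q ^ i)%N.

Lemma M0_pos : (0 < M0)%N.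
Proof. by rewrite (bigD1 (Ordinal n_pos)) //= expn0. Qed.

Lemma card_eq : (p ^ h).-1 = (q.-1 * M0)%N.
Proof. by rewrite -qn predn_exp. Qed.

Lemma iter_sig_q j (b : K) : iter j sig b = b ^+ (q ^ ((r' * j) %% n)).
Proof.
rewrite iter_pow /frobp.
have e1 : ((p ^ r) ^ j = q ^ (r' * j))%N.
  rewrite -!expnM; congr (p ^ _)%N.
  have E1 := r_eq; set a := r' in E1 *; set c := g in E1 *.
  rewrite {1}E1; nia.
rewrite e1 {1}(divn_eq (r' * j) n) expnD expnM -expnM [(_ * n)%N]mulnC expnM qn exprM fixPk.
by [].
Qed.

Lemma hmap_inj : injective (fun j : 'I_n => Ordinal (ltn_pmod (r' * j) n_pos)).
Proof.
move=> j1 j2 /(congr1 val) /= E; apply: val_inj.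
exact: (mod_cancel _ _ _ _ cop (ltn_ord j1) (ltn_ord j2) E).
Qed.

Lemma N_pow b : \prod_(0 <= j < n) iter j sig b = b ^+ M0.
Proof.
rewrite big_mkord (eq_bigr (fun j : 'I_n => b ^+ (q ^ (Ordinal (ltn_pmod (r' * j) n_pos))))); last first.
  by move=> j _; rewrite iter_sig_q.
rewrite -prodrXr; symmetry.
exact: (reindex_inj (P := xpredT) (F := fun i : 'I_n => b ^+ (q ^ i)) hmap_inj).
Qed.

Notation Nm x := (\prod_(0 <= j < n) iter j sig x).

Lemma Nm_fix x : sig (Nm x) = Nm x.
Proof.
rewrite (big_morph sig sM s1).
have sn := sig_n x.
have [n' En] : exists n', n = n'.+1 by exists n.-1; rewrite prednK // n_pos.
rewrite En in sn *.
have sn' : sig (iter n' sig x) = x := sn.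
rewrite big_nat_recr //= big_nat_recl //= sn' mulrC.
by [].
Qed.

Definition U := [set x : K | x != 0].
Definition Fx := [set x : K | (x != 0) && (sig x == x)].

Lemma card_U : #|U| = (p ^ h).-1.
Proof. by rewrite -hK -(cardsC1 (0 : K)); apply: eq_card => x; rewrite !inE. Qed.

Lemma card_Fx : (#|Fx| <= q.-1)%N.
Proof.
rewrite cardE; apply: max_unity_roots; [by have := q_gt1; lia | | exact: enum_uniq].
apply/allP => x; rewrite mem_enum inE => /andP [x0 /eqP sx].
have tx : tau x = x.
  apply: (@fix_coprime _ tau n r').
  - exact: n_pos.
  - exact: tau_n.
  - exact: cop.
  - by rewrite -sig_tau.
rewrite unity_rootE; apply/eqP; apply: (mulIf x0); rewrite mul1r -exprSr prednK //.
by have := q_gt1; lia.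
Qed.

Lemma Nm_surj : (forall a, a != 0 -> sig a = a -> exists b, Nm b = a) /\ #|Fx| = q.-1.
Proof.
set im := [set Nm x | x in U].
have sub : im \subset Fx.
  apply/subsetP => c /imsetP [x]; rewrite inE => x0 ->.
  by rewrite inE Nm_fix eqxx andbT N_pow expf_neq0.
have fib c : c \in im -> (#|[set i | (i \in U) && (Nm i == c)]| <= M0)%N.
  case/imsetP => b0; rewrite inE => b00 ->.
  set S := [set i | _].
  have -> : #|S| = size (map (fun x => x / b0) (enum S)) by rewrite size_map cardE.
  apply: max_unity_roots; first exact: M0_pos.
    apply/allP => y /mapP [x]; rewrite mem_enum inE => /andP [_ /eqP Ex] ->.
    by rewrite unity_rootE expr_div_n -!N_pow Ex divff // N_pow expf_neq0.
  rewrite map_inj_in_uniq ?enum_uniq // => x y _ _ /= E.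
  by apply: (mulIf (invr_neq0 b00)).
have tot : ((p ^ h).-1 <= #|im| * M0)%N.
  rewrite -card_U -sum1_card (partition_big_imset (fun x => Nm x)) /= -/im.
  rewrite -sum_nat_const; apply: leq_sum => c hc.
  by rewrite sum1dep_card fib.
have ci : (#|im| <= #|Fx|)%N by exact: subset_leq_card.
have cF := card_Fx.
have E : #|im| = q.-1 /\ #|Fx| = q.-1.
  have := M0_pos; rewrite card_eq in tot.
  move: tot ci cF; move: (#|im|) (#|Fx|) (q.-1) M0 => x y z m; nia.
case: E => Ei EF; split => //.
have eqs : im =i Fx by apply/subset_cardP => //; rewrite Ei EF.
move=> a a0 sa; have : a \in Fx by rewrite inE a0 sa eqxx.
by rewrite -eqs => /imsetP [b _ ->]; exists b.
Qed.

End FF.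

Theorem mainTheorem17 (p h r : nat) (K : finFieldType)
  (hp : prime p) (hK : #|K| = (p ^ h)%N) (hr1 : (1 <= r)%N) (hrh : (r <= h.-1)%N) :
  let sigma := frobp (K := K) p r in
  let n := (h %/ gcdn r h)%N in
  let q := (p ^ gcdn r h)%N in
  ((n = 2%N \/ n = 3%N) \/ (prime n /\ (n %| q.-1)%N)) ->
  (forall a : K, skew_irreducible sigma ('X^n - a%:P) <-> sigma a != a) /\
  (exists s : seq {poly K},
     uniq s /\
     (forall f : {poly K},
        f \in s <-> ((exists a : K, f = 'X^n - a%:P) /\ skew_irreducible sigma f)) /\
     size s = (p ^ h - q)%N).
Proof.
cbv zeta => Hn.
have hnp : prime (h %/ gcdn r h) by case: Hn => [[->|->]|[]].
have S0 : frobp (K := K) p r 0 = 0 by apply: s0.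
have S1 : frobp (K := K) p r 1 = 1 by apply: s1.
have SD : forall x y : K, frobp p r (x + y) = frobp p r x + frobp p r y.
  by move=> x y; exact: (sD _ _ _ _ hp hK).
have SM : forall x y : K, frobp p r (x * y) = frobp p r x * frobp p r y by apply: sM.
have Sinj : forall x : K, frobp p r x = 0 -> x = 0 by apply: sinj.
have n1 := n_gt1 _ _ _ _ hp hK hr1 hrh.
have n0 : (0 < h %/ gcdn r h)%N by apply: ltnW.
have [Nsurj cardFx] := Nm_surj _ _ _ _ hp hK hr1 hrh hnp.
have Part1 : forall a : K, skew_irreducible (frobp p r) ('X^(h %/ gcdn r h) - a%:P) <-> frobp p r a != a.
  move=> a; split.
  - move=> [_ Hirr]; apply/negP => /eqP sa.
    have [b Hb] : exists b, \prod_(0 <= j < h %/ gcdn r h) iter j (frobp (K := K) p r) b = a.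
      case: (eqVneq a 0) => [->|a0]; last exact: Nsurj.
      by exists 0; rewrite big_ltn // /= mul0r.
    have E : 'X^(h %/ gcdn r h) - a%:P = skew_mul (frobp p r)
        (\poly_(k < h %/ gcdn r h) cf K (frobp (K := K) p r) (h %/ gcdn r h) b k) ('X - b%:P).
      by rewrite (@reduc K (frobp p r) S0 S1 SD _ b n0) Hb.
    apply: (Hirr _ _ E).
    split; first by rewrite size_XnsubC // ltnS size_poly.
    by rewrite size_XnsubC // size_XsubC ltnS.
  - move=> sa; split; first exact: (@not_unit K (frobp p r) S0 Sinj _ a n0).
    move=> g0 h0 E; rewrite size_XnsubC // => -[sg sh].
    have a0 : a != 0 by apply: contra sa => /eqP ->; rewrite S0.
    apply: (@irr_key K (frobp p r) S0 S1 SD SM Sinj _ a n0 _ _ a0 g0 h0 (esym E) sg sh).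
      by apply: (sig_n _ _ _ _ hp hK hr1 hrh).
    by move=> d hd; apply: (fix_iter _ _ _ _ hp hK hr1 hrh hnp).
split; first exact: Part1.
exists [seq 'X^(h %/ gcdn r h) - a%:P | a <- enum [set a : K | frobp p r a != a]].
split.
  rewrite map_inj_uniq ?enum_uniq //.
  by move=> a b /addrI /oppr_inj /polyC_inj.
split.
  move=> f; split.
    case/mapP => a; rewrite mem_enum inE => sa ->.
    by split; [exists a | apply/Part1].
  case=> [[a ->] Hirr]; apply/mapP; exists a => //.
  by rewrite mem_enum inE -Part1.
have cFix : #|[set a : K | frobp p r a == a]| = (p ^ gcdn r h)%N.
  have -> : [set a : K | frobp p r a == a] = 0 |: Fx p r K.
    apply/setP => x; rewrite !inE; case: (eqVneq x 0) => [->|x0]; first by rewrite S0 !eqxx.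
    by [].
  rewrite cardsU1 cardFx inE eqxx /= add1n prednK // expn_gt0 prime_gt0 //.
have -> : [set a : K | frobp p r a != a] = ~: [set a : K | frobp p r a == a].
  by apply/setP => x; rewrite !inE.
by rewrite size_map -cardE cardsCs setCK cFix hK.
Qed.
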